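(* Let $S=\langle P,\varphi\rangle$ be a SUT model, $t$ a strength, $N\ge1$ an integer and $lb$ an integer with $0\le lb<CAN(t,S)$. Consider the Weighted Partial MaxSAT instance $WPMSat_{CCX}^{N,t,S,lb}$ (defined in the context) with weights $w_i$. (1) If $w_i=2^{i-(lb+2)}$ for all $i$: when $N\ge CAN(t,S)$ its optimal cost is $2^{CAN(t,S)-(lb+1)}-1$, and otherwise it is $\infty$. (2) If $w_i=i-(lb+2)+1$ for all $i$: when $N\ge CAN(t,S)$ its optimal cost is $(1+n)\cdot n/2$ where $n=CAN(t,S)-(lb+1)$, and otherwise it is $\infty$.
   Context: A SUT model is $S=\langle P,\varphi\rangle$, where $P$ is a finite set of parameters, each $p\in P$ having a finite nonempty domain $d(p)$, and $\varphi$ is a propositional formula whose atoms have the form $(p=v)$ with $p\in P$, $v\in d(p)$. A test case is a full assignment $A$ giving each $p$ a value in $d(p)$ such that $\varphi$ is true when each atom $(p=v)$ is read as true iff $A(p)=v$; it is assumed that at least one test case exists. Fix a strength $t$ with $1\le t\le|P|$. A $t$-tuple is an assignment of values to exactly $t$ distinct parameters, viewed as a set of pairs $(p,v)$; a test case covers $\tau$ if it assigns $v$ to $p$ for every $(p,v)\in\tau$. A $t$-tuple is allowed if some test case covers it; $\mathcal T_a$ is the set of allowed $t$-tuples. A covering array $CA(N;t,S)$ is a list of $N$ test cases (repetitions allowed) covering every allowed $t$-tuple; $CAN(t,S)$ is the minimum $N$ for which a $CA(N;t,S)$ exists. $[N]=\{1,\dots,N\}$. A Weighted Partial MaxSAT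 instance consists of hard constraints and soft clauses $(c,w)$ with positive integer weight $w$; its optimal cost is the minimum, over truth assignments satisfying all hard constraints, of the total weight of falsified soft clauses, and $\infty$ if the hard constraints are unsatisfiable. Variables: $x_{i,p,v}$ ($i\in[N]$, $p\in P$, $v\in d(p)$), $c^i_\tau$ ($i\in\{0,\dots,N\}$, $\tau\in\mathcal T_a$), $u_i$ ($i\in\{lb+2,\dots,N\}$). Hard constraints of $WPMSat_{CCX}^{N,t,S,lb}$: (X) for every $i\in[N]$, $p\in P$: exactly one of $\{x_{i,p,v}:v\in d(p)\}$ is true; (SUTX) for every $i\in[N]$: the formula obtained from $\varphi$ by replacing each atom $(p=v)$ with $x_{i,p,v}$; (CCX) (a) for every $i\in[N]$, $\tau\in\mathcal T_a$, $(p,v)\in\tau$: $c^i_\tau\rightarrow(c^{i-1}_\tau\vee x_{i,p,v})$; (b) for every $\tau\in\mathcal T_a$: the unit clause $c^N_\tau$; (c) for every $\tau\in\mathcal T_a$: $c^N_\tau\rightarrow\neg c^0_\tau$; (BSU) for every $i\in\{lb+2,\dots,N-1\}$: $u_{i+1}\rightarrow u_i$; (CCU) for every $i\in\{lb+2,\dots,N\}$, $\tau\in\mathcal T_a$: $\neg c^{i-1}_\tau\rightarrow u_i$. Soft clauses: $(\neg u_i,w_i)$ for every $i\in\{lb+2,\dots,N\}$. *)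

(* Defs.v *)
From mathcomp Require Import all_boot.
Set Implicit Arguments. Unset Strict Implicit. Unset Printing Implicit Defensive.

Inductive form (A : Type) : Type :=
| FTrue | FFalse
| FAtom of A
| FNot of form A
| FAnd of form A & form A
| FOr of form A & form A
| FImp of form A & form A
| FIff of form A & form A.
Arguments FTrue {A}. Arguments FFalse {A}.

Fixpoint eval_form (A : Type) (s : A -> bool) (f : form A) : bool :=
  match f with
  | FTrue => true
  | FFalse => false
  | FAtom a => s a
  | FNot g => ~~ eval_form s g
  | FAnd g h => eval_form s g && eval_form s h
  | FOr g h => eval_form s g || eval_form s h
  | FImp g h => eval_form s g ==> eval_form s h
  | FIff g h => eval_form s g == eval_form s h
  end.

Fixpoint subst_form (A B : Type) (r : A -> form B) (f : form A) : form B :=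
  match f with
  | FTrue => FTrue
  | FFalse => FFalse
  | FAtom a => r a
  | FNot g => FNot (subst_form r g)
  | FAnd g h => FAnd (subst_form r g) (subst_form r h)
  | FOr g h => FOr (subst_form r g) (subst_form r h)
  | FImp g h => FImp (subst_form r g) (subst_form r h)
  | FIff g h => FIff (subst_form r g) (subst_form r h)
  end.

Fixpoint atoms (A : Type) (f : form A) : seq A :=
  match f with
  | FTrue | FFalse => [::]
  | FAtom a => [:: a]
  | FNot g => atoms g
  | FAnd g h | FOr g h | FImp g h | FIff g h => atoms g ++ atoms h
  end.

Definition big_or (A : Type) (l : seq (form A)) : form A := foldr (@FOr A) FFalse l.
Definition big_and (A : Type) (l : seq (form A)) : form A := foldr (@FAnd A) FTrue l.

Definition exactly_one (A : Type) (l : seq (form A)) : form A :=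
  FAnd (big_or l)
       (big_and [seq FNot (FAnd (nth FFalse l i) (nth FFalse l j))
                | i <- iota 0 (size l), j <- iota i.+1 (size l - i.+1)]).

Record wpms (Var : Type) := WPMS {
  hard : seq (form Var);
  soft : seq (form Var * nat)
}.

Definition hard_sat (Var : Type) (I : wpms Var) (s : Var -> bool) : Prop :=
  all (eval_form s) (hard I).

Definition cost (Var : Type) (I : wpms Var) (s : Var -> bool) : nat :=
  \sum_(c <- soft I) (if eval_form s c.1 then 0 else c.2).

(* [OptimalCost I oc]: the optimal cost of I is oc, where None = infinity. *)
Definition OptimalCost (Var : Type) (I : wpms Var) (oc : option nat) : Prop :=
  match oc with
  | None => ~ exists s, hard_sat I s
  | Some k => (exists s, hard_sat I s /\ cost I s = k) /\
              (forall s, hard_sat I s -> k <= cost I s)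
  end.

(* SUT models: parameters P, values V, domains d p (a subset of V),    *)
(* and a formula phi with atoms (p, v) read as "p = v".               *)
Section SUT.
Variables (P V : finType) (d : P -> {set V}) (phi : form (P * V)).

Definition test_case (A : {ffun P -> V}) : bool :=
  [forall p, A p \in d p] && eval_form (fun a : P * V => A a.1 == a.2) phi.

Definition is_ttuple (t : nat) (tau : {set P * V}) : bool :=
  [&& #|tau| == t,
      [forall x in tau, x.2 \in d x.1] &
      [forall x in tau, forall y in tau, (x.1 == y.1) ==> (x == y)]].

Definition covers (A : {ffun P -> V}) (tau : {set P * V}) : bool :=
  [forall x in tau, A x.1 == x.2].

Definition allowed_tuples (t : nat) : {set {set P * V}} :=
  [set tau | is_ttuple t tau & [exists A, test_case A && covers A tau]].

Definition has_CA (t N : nat) : bool :=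
  [exists f : {ffun 'I_N -> {ffun P -> V}},
     [forall i, test_case (f i)] &&
     [forall tau in allowed_tuples t, exists i, covers (f i) tau]].

Lemma has_CA_ex (t : nat) : exists N, has_CA t N.
Proof.
case: (pickP test_case) => [A0 HA0|Hn].
- exists #|allowed_tuples t|.
  pose g (i : 'I_#|allowed_tuples t|) :=
    odflt A0 [pick A | test_case A && covers A (enum_val i)].
  apply/existsP; exists [ffun i => g i]; apply/andP; split.
  + apply/forallP => i; rewrite ffunE /g.
    by case: pickP => [A /andP[]|] //.
  + apply/forall_inP => tau Htau; apply/existsP.
    exists (enum_rank_in Htau tau); rewrite ffunE /g enum_rankK_in //.
    case: pickP => [A /andP[] //|Hno].
    move: Htau; rewrite inE => /andP[_ /existsP[A HA]].
    by move: (Hno A); rewrite HA.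
- exists 0; apply/existsP; exists [ffun i : 'I_0 => ltac:(by case: i)].
  apply/andP; split; first by apply/forallP => -[].
  apply/forall_inP => tau; rewrite inE => /andP[_ /existsP[A /andP[HA _]]].
  by move: (Hn A); rewrite HA.
Qed.

Definition CAN (t : nat) : nat := ex_minn (has_CA_ex t).

Inductive mvar :=
| Xv of nat & P & V
| Cv of nat & {set P * V}
| Uv of nat.

Definition fv (x : mvar) : form mvar := FAtom x.

(* indices lb+2 .. M (inclusive) *)
Definition range (a b : nat) : seq nat := iota a (b.+1 - a).

Definition WPMSat_CCX (N t lb : nat) (w : nat -> nat) : wpms mvar :=
  let Ta := enum (allowed_tuples t) in
  WPMS
  (
    [seq exactly_one [seq fv (Xv i p v) | v <- enum (d p)]
    | i <- range 1 N, p <- enum P]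
 ++
    [seq subst_form (fun a : P * V => fv (Xv i a.1 a.2)) phi | i <- range 1 N]
 ++
    flatten [seq [seq FImp (fv (Cv i tau)) (FOr (fv (Cv i.-1 tau)) (fv (Xv i pv.1 pv.2)))
                 | pv <- enum tau]
            | i <- range 1 N, tau <- Ta]
 ++
    [seq fv (Cv N tau) | tau <- Ta]
 ++
    [seq FImp (fv (Cv N tau)) (FNot (fv (Cv 0 tau))) | tau <- Ta]
 ++
    [seq FImp (fv (Uv i.+1)) (fv (Uv i)) | i <- range (lb + 2) N.-1]
 ++
    [seq FImp (FNot (fv (Cv i.-1 tau))) (fv (Uv i))
    | i <- range (lb + 2) N, tau <- Ta] )
  (
    [seq (FNot (fv (Uv i)), w i) | i <- range (lb + 2) N] ).

End SUT.

(* Main.v *)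
Require Import Defs.
From mathcomp Require Import all_boot zify.
Set Implicit Arguments. Unset Strict Implicit. Unset Printing Implicit Defensive.

Lemma eval_subst (A B : Type) (s : B -> bool) (r : A -> form B) f :
  eval_form s (subst_form r f) = eval_form (fun a => eval_form s (r a)) f.
Proof. by elim: f => //= g -> // h ->. Qed.

Lemma eq_eval (A : eqType) (s1 s2 : A -> bool) f :
  (forall a, a \in atoms f -> s1 a = s2 a) -> eval_form s1 f = eval_form s2 f.
Proof.
elim: f => //= [a H|g IH H|g IHg h IHh H|g IHg h IHh H|g IHg h IHh H|g IHg h IHh H];
  try (by rewrite H // inE);
  try (by rewrite IH);
  by rewrite IHg ?IHh // => a Ha; apply: H; rewrite mem_cat Ha ?orbT.
Qed.

Lemma eval_big_or (A : Type) (s : A -> bool) l :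
  eval_form s (big_or l) = has (eval_form s) l.
Proof. by elim: l => //= f l ->. Qed.

Lemma eval_big_and (A : Type) (s : A -> bool) l :
  eval_form s (big_and l) = all (eval_form s) l.
Proof. by elim: l => //= f l ->. Qed.

Lemma all_flatten (T : Type) (a : pred T) (ss : seq (seq T)) :
  all a (flatten ss) = all (all a) ss.
Proof. by elim: ss => //= s ss IH; rewrite all_cat IH. Qed.

Lemma exactly_one_intro (A : Type) (T : eqType) (s : A -> bool) (g : T -> A)
  (e : seq T) x :
  uniq e -> x \in e -> s (g x) -> (forall y, y \in e -> s (g y) -> y = x) ->
  eval_form s (exactly_one [seq FAtom (g v) | v <- e]).
Proof.
move=> Ue xe sx Hy; rewrite /exactly_one /= eval_big_or eval_big_and.
apply/andP; split.
  by rewrite has_map; apply/hasP; exists x.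
apply/all_allpairsP => i j; rewrite size_map !mem_iota => /andP[_ Hi] /andP[Hij Hj].
have Hj' : j < size e by lia.
rewrite (nth_map x) // (nth_map x) //=.
apply/negP => /andP[H1 H2].
have e1 := Hy _ (mem_nth x Hi) H1; have e2 := Hy _ (mem_nth x Hj') H2.
have : nth x e i == nth x e j by rewrite e1 e2.
rewrite nth_uniq //; move/eqP => E; lia.
Qed.

Lemma exactly_one_elim (A : Type) (T : eqType) (s : A -> bool) (g : T -> A)
  (e : seq T) :
  eval_form s (exactly_one [seq FAtom (g v) | v <- e]) ->
  (exists2 x, x \in e & s (g x)) /\
  (forall y z, y \in e -> z \in e -> s (g y) -> s (g z) -> y = z).
Proof.
rewrite /exactly_one /= eval_big_or eval_big_and => /andP[].
rewrite has_map => /hasP[x xe sx] /all_allpairsP H.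
split; first by exists x.
have key : forall y z, y \in e -> z \in e -> index y e < index z e ->
    s (g y) -> s (g z) -> False.
  move=> y z ye ze lt sy sz.
  have := H (index y e) (index z e).
  rewrite size_map !mem_iota /= index_mem ye.
  have zs : index z e < size e by rewrite index_mem.
  have -> : index y e < index z e < (index y e).+1 + (size e - (index y e).+1) by lia.
  move=> /(_ isT isT); rewrite (nth_map y) ?index_mem // (nth_map y) ?index_mem //=.
  by rewrite !nth_index // sy sz.
move=> y z ye ze sy sz; case: (ltngtP (index y e) (index z e)) => Hl.
- by case: (key y z).
- by case: (key z y).
- by rewrite -(nth_index y ye) Hl nth_index.
Qed.

Lemma mem_range a b i : (i \in range a b) = (a <= i <= b).
Proof. rewrite /range mem_iota; apply/idP/idP; lia. Qed.

Lemma main (P V : finType) (d : P -> {set V}) (phi : form (P * V))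
  (Hphi : forall a, a \in atoms phi -> a.2 \in d a.1)
  (Htc : exists A, test_case d phi A)
  (t N lb : nat) (w : nat -> nat) (c : nat)
  (Hc : has_CA d phi t c) (Hmin : forall n, has_CA d phi t n -> c <= n)
  (Hlb : lb < c) :
  OptimalCost (WPMSat_CCX d phi N t lb w)
    (if c <= N then Some (\sum_(i <- range (lb + 2) N | i <= c) w i) else None).
Proof.
case: Htc => A0 HA0.
have LB : forall s, hard_sat (WPMSat_CCX d phi N t lb w) s ->
   c <= N /\ forall i, lb + 2 <= i <= N -> i <= c -> s (Uv P V i).
  move=> s; rewrite /hard_sat /= !all_cat.
  move=> /andP[/all_allpairsP H1 /andP[H2 /andP[H3 /andP[H4 /andP[H5 /andP[_ /all_allpairsP H7]]]]]].
  move: H2; rewrite all_map => /allP H2.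
  move: H3; rewrite all_flatten => /all_allpairsP H3.
  move: H4; rewrite all_map => /allP H4.
  move: H5; rewrite all_map => /allP H5.
  pose row i : {ffun P -> V} := [ffun p => odflt (A0 p) [pick v in d p | s (Xv i p v)]].
  have rowP : forall i p v, 1 <= i <= N -> v \in d p -> s (Xv i p v) = (row i p == v).
    move=> i p v Hi vd.
    have [[x xe sx] U] := exactly_one_elim (H1 i p ltac:(by rewrite mem_range) (mem_enum _ _)).
    rewrite /row ffunE; case: pickP => [v' /andP[v'd sv'] | none] /=.
      apply/idP/eqP => [sv | <- //]; apply: U => //; by rewrite mem_enum.
    by move: (none x); rewrite -(mem_enum (d p)) xe sx.
  have rowd : forall i p, 1 <= i <= N -> row i p \in d p.
    move=> i p Hi.
    have [[x xe sx] U] := exactly_one_elim (H1 i p ltac:(by rewrite mem_range) (mem_enum _ _)).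
    rewrite /row ffunE; case: pickP => [v' /andP[v'd sv'] // | none] /=.
    by move: (none x); rewrite -(mem_enum (d p)) xe sx.
  have rowtc : forall i, 1 <= i <= N -> test_case d phi (row i).
    move=> i Hi; apply/andP; split; first by apply/forallP => p; apply: rowd.
    have := H2 i ltac:(by rewrite mem_range); rewrite /preim /= eval_subst => E.
    have Eq : eval_form (fun a => eval_form s (fv (Xv i a.1 a.2))) phi =
              eval_form (fun a : P * V => row i a.1 == a.2) phi.
      apply: eq_eval => a Ha; rewrite /fv /=; exact: rowP (Hphi a Ha).
    by rewrite -Eq.
  have ttd : forall tau x, tau \in allowed_tuples d phi t -> x \in tau -> x.2 \in d x.1.
    move=> tau x; rewrite inE => /andP[/and3P[_ /forall_inP H _] _]; exact: H.
  have C0 : forall tau, tau \in allowed_tuples d phi t -> s (Cv 0 tau) = false.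
    move=> tau Ht; have := H5 tau ltac:(by rewrite mem_enum); have := H4 tau ltac:(by rewrite mem_enum).
    by rewrite /fv /= => ->; case: (s (Cv 0 tau)).
  have chain : forall tau, tau \in allowed_tuples d phi t -> forall k, k <= N ->
      s (Cv k tau) -> exists2 i, 1 <= i <= k & covers (row i) tau.
    move=> tau Ht; elim => [|k IH] kN sk; first by rewrite C0 in sk.
    case E: (s (Cv k tau)).
      by case: (IH (ltnW kN) E) => i Hi Hc'; exists i => //; lia.
    exists k.+1; first by lia.
    apply/forall_inP => x xt.
    have := H3 k.+1 tau ltac:(by rewrite mem_range; lia) ltac:(by rewrite mem_enum).
    rewrite all_map => /allP /(_ x ltac:(by rewrite mem_enum)) /=.
    rewrite /fv /= sk E /= => sx.
    rewrite -rowP. all: try exact sx. all: try exact: ttd Ht xt. exact: kN.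
  have G : forall k, k <= N -> (forall tau, tau \in allowed_tuples d phi t -> s (Cv k tau)) -> c <= k.
    move=> k kN Hk; apply: Hmin; apply/existsP; exists [ffun j : 'I_k => row j.+1].
    apply/andP; split.
      by apply/forallP => j; rewrite ffunE; apply: rowtc; have := ltn_ord j; lia.
    apply/forall_inP => tau Ht; apply/existsP.
    case: (chain tau Ht k kN (Hk _ Ht)) => i Hi cov.
    have ik : i.-1 < k by lia.
    exists (Ordinal ik); rewrite ffunE /=.
    by have -> : i.-1.+1 = i by lia.
  have cN : c <= N.
    apply: G => // tau Ht; have := H4 tau ltac:(by rewrite mem_enum); by rewrite /fv.
  split => // i Hi ic; apply/negPn/negP => nU.
  have : c <= i.-1.
    apply: G; first by lia.
    move=> tau Ht; have := H7 i tau ltac:(by rewrite mem_range) ltac:(by rewrite mem_enum).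
    rewrite /fv /= (negbTE nU) implybF; exact: negbNE.
  lia.
case: ifP => cN; last first.
  by case=> s Hs; have [cN' _] := LB s Hs; rewrite cN' in cN.
split; last first.
  move=> s Hs; have [_ HU] := LB s Hs.
  rewrite /cost /= big_map big_mkcond big_seq [X in _ <= X]big_seq.
  apply: leq_sum => i; rewrite mem_range => Hi /=.
  by case: ifP => // ic; rewrite HU.
case/existsP: Hc => f /andP[/forallP Hf /forall_inP Hcov].
pose row i : {ffun P -> V} := odflt A0 (omap f (insub i.-1)).
have rowtc : forall i, test_case d phi (row i).
  by move=> i; rewrite /row; case: insub.
have rowE : forall k : 'I_c, row k.+1 = f k.
  by move=> k; rewrite /row /= (valK k).
pose s x := match x with
  | Xv i p v => row i p == v
  | Cv i tau => [exists k : 'I_c, (k < i) && covers (f k) tau]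
  | Uv i => i <= c end.
exists s; split; last first.
  rewrite /cost /= big_map [RHS]big_mkcond; apply: eq_bigr => i _ /=.
  by case: (i <= c).
have and7I : forall a1 a2 a3 a4 a5 a6 a7 : bool, a1 -> a2 -> a3 -> a4 -> a5 -> a6 -> a7 -> [&& a1, a2, a3, a4, a5, a6 & a7] by move=> a1 a2 a3 a4 a5 a6 a7 -> -> -> -> -> -> ->.
rewrite /hard_sat /= !all_cat; apply: and7I.
- apply/all_allpairsP => i p _ _ /=.
  apply: (@exactly_one_intro _ _ s (fun v => Xv i p v) _ (row i p)).
  + exact: enum_uniq.
  + by rewrite mem_enum; case/andP: (rowtc i) => /forallP.
  + by rewrite /s eqxx.
  + by move=> y _ /eqP.
- rewrite all_map; apply/allP => i _ /=; rewrite eval_subst.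
  by case/andP: (rowtc i).
- rewrite all_flatten; apply/all_allpairsP => i tau _ Htau.
  rewrite all_map; apply/allP => pv Hpv /=.
  apply/implyP => /existsP[k /andP[ki kc]].
  case: (ltnP k i.-1) => h.
    by apply/orP; left; apply/existsP; exists k; rewrite h.
  have -> : i = k.+1 by lia.
  by rewrite rowE; apply/orP; right; move/forall_inP: kc; apply; rewrite -mem_enum.
- rewrite all_map; apply/allP => tau Ht /=.
  rewrite mem_enum in Ht; case/existsP: (Hcov tau Ht) => k kc.
  by apply/existsP; exists k; rewrite kc andbT; have := ltn_ord k; lia.
- rewrite all_map; apply/allP => tau Ht /=; apply/implyP => _.
  by apply/negP => /existsP[k].
- rewrite all_map; apply/allP => i _ /=; apply/implyP; lia.
- apply/all_allpairsP => i tau _ Ht /=; apply/implyP => nC.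
  rewrite leqNgt; apply/negP => lt; apply: (negP nC).
  rewrite mem_enum in Ht; case/existsP: (Hcov tau Ht) => k kc.
  by apply/existsP; exists k; rewrite kc andbT; have := ltn_ord k; lia.
Qed.

Lemma sum_shift (w : nat -> nat) lb c N : lb < c -> c <= N ->
  \sum_(i <- range (lb + 2) N | i <= c) w i =
  \sum_(k <- iota 0 (c - (lb + 1))) w (lb + 2 + k).
Proof.
move=> Hl Hc; rewrite /range.
have -> : N.+1 - (lb + 2) = (c - (lb + 1)) + (N - c) by lia.
rewrite iotaD big_cat /=.
rewrite [X in _ + X = _]big1_seq ?addn0; last first.
  by move=> i /andP[ic]; rewrite mem_iota => /andP[h _]; lia.
have -> : iota (lb + 2) (c - (lb + 1)) = map (addn (lb + 2)) (iota 0 (c - (lb + 1))).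
  by rewrite -iotaDl addn0.
rewrite big_map big_seq_cond [RHS]big_seq; apply: eq_bigl => k /=.
rewrite mem_iota; apply/idP/idP; lia.
Qed.

Lemma sum_pow2 n : \sum_(k <- iota 0 n) 2 ^ k = 2 ^ n - 1.
Proof.
elim: n => [|n IH]; first by rewrite big_nil.
rewrite -addn1 iotaD big_cat /= IH big_seq1 add0n expnD expn1.
have : 0 < 2 ^ n by rewrite expn_gt0.
lia.
Qed.

Lemma sum_lin n : \sum_(k <- iota 0 n) (k + 1) = (1 + n) * n %/ 2.
Proof.
suff H : (\sum_(k <- iota 0 n) (k + 1)) * 2 = (1 + n) * n.
  by rewrite -H mulnK.
elim: n => [|n IH]; first by rewrite big_nil.
rewrite -addn1 iotaD big_cat /= big_seq1 add0n mulnDl IH.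
lia.
Qed.

Theorem proposition5
  (P V : finType) (d : P -> {set V}) (phi : form (P * V))
  (* each domain is nonempty *)
  (Hd : forall p, d p != set0)
  (* atoms (p = v) of phi satisfy v \in d p *)
  (Hphi : forall a, a \in atoms phi -> a.2 \in d a.1)
  (* at least one test case exists *)
  (Htc : exists A, test_case d phi A)
  (t N lb : nat)
  (Ht : 1 <= t <= #|P|) (HN : 1 <= N)
  (Hlb : lb < CAN d phi t) :
  OptimalCost (WPMSat_CCX d phi N t lb (fun i => 2 ^ (i - (lb + 2))))
    (if CAN d phi t <= N then Some (2 ^ (CAN d phi t - (lb + 1)) - 1) else None)
  /\
  OptimalCost (WPMSat_CCX d phi N t lb (fun i => i - (lb + 2) + 1))
    (if CAN d phi t <= N
     then Some ((1 + (CAN d phi t - (lb + 1))) * (CAN d phi t - (lb + 1)) %/ 2)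
     else None).
Proof.
have [Hc Hmin] : has_CA d phi t (CAN d phi t) /\
   forall n, has_CA d phi t n -> CAN d phi t <= n.
  by rewrite /CAN; case: ex_minnP.
have M1 := main Hphi Htc N (fun i => 2 ^ (i - (lb + 2))) Hc Hmin Hlb.
have M2 := main Hphi Htc N (fun i => i - (lb + 2) + 1) Hc Hmin Hlb.
move: M1 M2; case: ifP => // cN.
rewrite !sum_shift //.
under eq_bigr do rewrite addKn.
under [in X in _ -> X]eq_bigr do rewrite addKn.
by rewrite sum_pow2 sum_lin; split.
Qed.
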